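(* Let $K$ be a field, $m\ge2$, $d_1,\ldots,d_m$ positive integers, $S=K[x_1,\ldots,x_m,y_1,\ldots,y_m]$, and for $1\le i<j\le m$ let $f_{ij}=x_i^{d_i}y_j^{d_j}-x_j^{d_j}y_i^{d_i}$. Let $J_L\subset S$ be the ideal generated by $f_{12},f_{13},\ldots,f_{1m}$. Then $\mathcal{R}=\{f_{12},\ldots,f_{1m}\}\cup\{g_{ij}:=y_1^{d_1}f_{ij}:2\le i<j\le m\}$ is a Gröbner basis of $J_L$ with respect to the lexicographic term order induced by $x_1\succ x_2\succ\cdots\succ x_m\succ y_1\succ\cdots\succ y_m$.
   Context: $J_L$ is the lattice basis ideal of the lattice $L\subset\mathbb{Z}^{2m}$ with $I_L=I_2(D)$, for the basis consisting of the exponent vectors of $f_{12},\ldots,f_{1m}$. *)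

(* Defs.v *)
From HB Require Import structures.
From mathcomp Require Import all_boot all_order all_algebra.
From mathcomp Require Import mpoly.
Set Implicit Arguments. Unset Strict Implicit. Unset Printing Implicit Defensive.
Import Order.TTheory GRing.Theory.
Local Open Scope ring_scope.

(* Polynomial ring S = K[x_1..x_m, y_1..y_m] is {mpoly K[m + m]}:
   x_i is the variable lshift m i, y_i the variable rshift m i
   (indices are 0-based: x_1 is x 0, etc.). *)
Section Defs.
Variables (K : fieldType) (m : nat).
Local Notation n := (m + m).

Definition xv (i : 'I_m) : {mpoly K[n]} := 'X_(lshift m i).
Definition yv (i : 'I_m) : {mpoly K[n]} := 'X_(rshift m i).

Definition fij (d : 'I_m -> nat) (i j : 'I_m) : {mpoly K[n]} :=
  xv i ^+ d i * yv j ^+ d j - xv j ^+ d j * yv i ^+ d i.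

Definition JL_gens (d : 'I_m -> nat) : seq {mpoly K[n]} :=
  [seq fij d i j | i <- [seq i <- enum 'I_m | val i == 0%N],
                   j <- [seq j <- enum 'I_m | (0 < val j)%N]].

Definition g_list (d : 'I_m -> nat) : seq {mpoly K[n]} :=
  flatten [seq [seq yv a ^+ d a * fij d p.1 p.2
                 | p <- [seq (b, c) | b <- enum 'I_m, c <- enum 'I_m]
                   & (0 < val p.1)%N && (val p.1 < val p.2)%N]
           | a <- enum 'I_m & val a == 0%N].

Definition R_list (d : 'I_m -> nat) : seq {mpoly K[n]} := JL_gens d ++ g_list d.
End Defs.

Section Groebner.
Variables (K : fieldType) (n : nat).

Definition in_ideal (G : seq {mpoly K[n]}) (f : {mpoly K[n]}) : Prop :=
  exists c : 'I_(size G) -> {mpoly K[n]}, f = \sum_(k < size G) c k * G`_k.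

(* pure lexicographic order on monomials, variable 0 the largest:
   x_1 > ... > x_m > y_1 > ... > y_m *)
Definition lex_lt (u v : 'X_{1..n}) : bool :=
  [exists i : 'I_n, [forall j : 'I_n, (val j < val i)%N ==> (u j == v j)]
                    && (u i < v i)%N].

Definition lex_lead (p : {mpoly K[n]}) (u : 'X_{1..n}) : Prop :=
  u \in msupp p /\ forall v, v \in msupp p -> v != u -> lex_lt v u.

Definition mdivides (u v : 'X_{1..n}) : bool := [forall i : 'I_n, (u i <= v i)%N].

Definition lex_groebner_basis (G : seq {mpoly K[n]}) (I : {mpoly K[n]} -> Prop) : Prop :=
  (forall g, g \in G -> I g) /\
  (forall f, I f -> f != 0 ->
     exists2 g, g \in G & exists u v, [/\ lex_lead g u, lex_lead f v & mdivides u v]).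
End Groebner.

(* Main.v *)
Require Import Defs.
From HB Require Import structures.
From mathcomp Require Import all_boot all_order all_algebra.
From mathcomp Require Import mpoly.
From mathcomp Require Import zify ring.
Set Implicit Arguments. Unset Strict Implicit. Unset Printing Implicit Defensive.
Import Order.TTheory GRing.Theory.
Local Open Scope ring_scope.

Section Lex.
Variable n : nat.
Implicit Types u v w : 'X_{1..n}.

Lemma lex_ltP u v : reflect (exists i : 'I_n, (forall j : 'I_n, (val j < val i)%N -> u j = v j) /\ (u i < v i)%N) (lex_lt u v).
Proof.
apply: (iffP existsP) => [[i /andP[/forallP H Hi]]|[i [H Hi]]]; exists i.
  by split=> // j Hj; apply/eqP; move: (H j); rewrite Hj.
by rewrite Hi andbT; apply/forallP=> j; apply/implyP=> Hj; rewrite H.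
Qed.

Lemma lex_irr u : ~~ lex_lt u u.
Proof. by apply/negP=> /lex_ltP[i [_]]; rewrite ltnn. Qed.

Lemma lex_trans u v w : lex_lt u v -> lex_lt v w -> lex_lt u w.
Proof.
move=> /lex_ltP[i [Hi Hui]] /lex_ltP[j [Hj Hvj]]; apply/lex_ltP.
case: (ltngtP (val i) (val j)) => [ij|ji|/val_inj ij].
- exists i; split; first by move=> k Hk; rewrite Hi // Hj // (ltn_trans Hk ij).
  by rewrite -(Hj _ ij).
- exists j; split; first by move=> k Hk; rewrite Hi ?Hj // (ltn_trans Hk ji).
  by rewrite (Hi _ ji).
- subst j; exists i; split; first by move=> k Hk; rewrite Hi ?Hj.
  exact: ltn_trans Hui Hvj.
Qed.

Lemma lex_asym u v : lex_lt u v -> ~~ lex_lt v u.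
Proof. by move=> H; apply/negP=> H'; move: (lex_trans H H'); rewrite (negbTE (lex_irr u)). Qed.

Lemma lex_neq u v : lex_lt u v -> u != v.
Proof. by move=> H; apply/eqP=> E; move: H; rewrite E (negbTE (lex_irr v)). Qed.

Lemma lex_total u v : u != v -> lex_lt u v || lex_lt v u.
Proof.
move=> Huv.
have [i0 Hi0] : exists i : 'I_n, u i != v i.
  apply/existsP; apply: contraNT Huv; rewrite negb_exists => /forallP H.
  by apply/eqP/mnmP=> i; move: (H i); rewrite negbK => /eqP.
case: (@arg_minnP _ i0 (fun i : 'I_n => u i != v i) (fun i : 'I_n => val i) Hi0) => i Hi Hmin.
have Hlt : forall j : 'I_n, (val j < val i)%N -> u j = v j.
  move=> j Hj; apply/eqP; apply: contraTT Hj => Hj; rewrite -leqNgt; exact: Hmin.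
case: (ltngtP (u i) (v i)) => [h|h|h]; last by rewrite h eqxx in Hi.
- by apply/orP; left; apply/lex_ltP; exists i.
- by apply/orP; right; apply/lex_ltP; exists i; split=> // j Hj; rewrite Hlt.
Qed.

Lemma lex_max (s : seq 'X_{1..n}) : s != [::] ->
  exists2 v, v \in s & forall w, w \in s -> w != v -> lex_lt w v.
Proof.
elim: s => // a s IH _.
case: (altP (s =P [::])) => [->|sne].
  exists a; first exact: mem_head.
  by move=> w; rewrite inE => ->.
case: (IH sne) => v vs Hv.
case: (altP (a =P v)) => [av|av].
  exists v; first by rewrite inE vs orbT.
  move=> w; rewrite inE => /orP[/eqP ->|ws]; first by rewrite av eqxx.
  exact: Hv.
case/orP: (lex_total av) => H.
  exists v; first by rewrite inE vs orbT.
  move=> w; rewrite inE => /orP[/eqP -> _|ws]; first exact H.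
  exact: Hv.
exists a; first exact: mem_head.
move=> w; rewrite inE => /orP[/eqP ->|ws]; first by rewrite eqxx.
move=> wa; case: (altP (w =P v)) => [->//|wv].
exact: lex_trans (Hv _ ws wv) H.
Qed.
End Lex.
Local Open Scope ring_scope.

Section Ideal.
Variables (K : fieldType) (n : nat).
Implicit Types (G : seq {mpoly K[n]}) (p q : {mpoly K[n]}).

Lemma in_ideal_mem G g : g \in G -> in_ideal G g.
Proof.
move=> gG; exists (fun k => ((val k == index g G)%:R)).
have Hi : (index g G < size G)%N by rewrite index_mem.
rewrite (bigD1 (Ordinal Hi)) //=.
rewrite eqxx mul1r nth_index // big1 ?addr0 // => k /negbTE Hk.
suff -> : (val k == index g G) = false by rewrite mul0r.
by apply/negbTE; apply: contraFN Hk => /eqP Hk; apply/eqP/val_inj.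
Qed.

Lemma in_idealD G p q : in_ideal G p -> in_ideal G q -> in_ideal G (p + q).
Proof.
move=> [c ->] [c' ->]; exists (fun k => c k + c' k).
by rewrite -big_split; apply: eq_bigr => k _; rewrite mulrDl.
Qed.

Lemma in_idealN G p : in_ideal G p -> in_ideal G (- p).
Proof.
move=> [c ->]; exists (fun k => - c k).
by rewrite -sumrN; apply: eq_bigr => k _; rewrite mulNr.
Qed.

Lemma in_idealM G a p : in_ideal G p -> in_ideal G (a * p).
Proof.
move=> [c ->]; exists (fun k => a * c k).
by rewrite mulr_sumr; apply: eq_bigr => k _; rewrite mulrA.
Qed.

Variable F : 'X_{1..n} -> K.
Definition lam p := \sum_(w <- msupp p) F w * p@_w.

Lemma lam_sub p (s : seq 'X_{1..n}) : uniq s -> {subset msupp p <= s} ->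
  lam p = \sum_(w <- s) F w * p@_w.
Proof.
move=> us sub.
rewrite [RHS](bigID (fun w => w \in msupp p)) /= [X in _ + X]big1 ?addr0.
  rewrite -big_filter /lam; apply: perm_big.
  apply: uniq_perm; [exact: msupp_uniq| exact: filter_uniq|].
  by move=> w; rewrite mem_filter; case: (boolP (w \in msupp p)) => // /sub ->.
by move=> w /memN_msupp_eq0 ->; rewrite mulr0.
Qed.

Lemma lamD p q : lam (p + q) = lam p + lam q.
Proof.
set s := undup (msupp p ++ msupp q).
have us : uniq s by exact: undup_uniq.
rewrite (@lam_sub (p + q) s) //; last first.
  by move=> w /msuppD_le; rewrite mem_undup.
rewrite (@lam_sub p s) ?(@lam_sub q s) //; last first.
- by move=> w wq; rewrite mem_undup mem_cat wq ?orbT.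
- by move=> w wq; rewrite mem_undup mem_cat wq ?orbT.
by rewrite -big_split; apply: eq_bigr => w _; rewrite mcoeffD mulrDr.
Qed.

Lemma lamZ c p : lam (c *: p) = c * lam p.
Proof.
rewrite (@lam_sub (c *: p) (msupp p)) ?msupp_uniq //; last exact: msuppZ_le.
by rewrite /lam mulr_sumr; apply: eq_bigr => w _; rewrite mcoeffZ mulrCA.
Qed.

Lemma lamN p : lam (- p) = - lam p.
Proof. by rewrite -scaleN1r lamZ mulN1r. Qed.

Lemma lamB p q : lam (p - q) = lam p - lam q.
Proof. by rewrite lamD lamN. Qed.

Lemma lam_sum (I : Type) (r : seq I) (P : pred I) (f : I -> {mpoly K[n]}) :
  lam (\sum_(i <- r | P i) f i) = \sum_(i <- r | P i) lam (f i).
Proof.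
apply: (big_morph lam lamD).
by rewrite /lam msupp0 big_nil.
Qed.

Lemma lamX u : lam 'X_[u] = F u.
Proof. by rewrite /lam msuppX big_seq1 mcoeffX eqxx mulr1. Qed.

Lemma lam_binom c A B : (forall u, F (u + A)%MM = F (u + B)%MM) ->
  lam (c * ('X_[A] - 'X_[B])) = 0.
Proof.
move=> HF; rewrite {1}[c]mpolyE mulr_suml lam_sum big1 // => u _.
by rewrite -scalerAl lamZ mulrBr -!mpolyXD lamB !lamX HF subrr mulr0.
Qed.
End Ideal.
Close Scope ring_scope.

Lemma sum_lt (m : nat) (F G : 'I_m -> nat) (i : 'I_m) :
  (forall k, F k <= G k) -> F i < G i -> \sum_k F k < \sum_k G k.
Proof.
move=> le lt; rewrite (bigD1 i) //= [X in _ < X](bigD1 i) //= -addSn.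
by apply: leq_add => //; apply: leq_sum => k _.
Qed.

Section Comb.
Variables (m : nat) (d : 'I_m -> nat).
Hypothesis hd : forall i, 0 < d i.
Variable i0 : 'I_m.
Hypothesis hi0 : val i0 = 0.
Local Notation n := (m + m).
Implicit Types u v w : 'X_{1..n}.

Definition xw w (i : 'I_m) := w (lshift m i).
Definition yw w (i : 'I_m) := w (rshift m i).
Definition ax w i := xw w i %/ d i.
Definition bx w i := yw w i %/ d i.
Definition key w := (if ax w i0 + bx w i0 == 0 then w else 0%MM,
   [ffun i => xw w i %% d i], [ffun i => yw w i %% d i],
   [ffun i => ax w i + bx w i], \sum_i ax w i).

Definition E (a b : 'I_m) : 'X_{1..n} :=
  [multinom ((if k == lshift m a then d a else 0) +
             (if k == rshift m b then d b else 0)) | k < n].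

Lemma xwD u v i : xw (u + v)%MM i = xw u i + xw v i.
Proof. by rewrite /xw mnmDE. Qed.
Lemma ywD u v i : yw (u + v)%MM i = yw u i + yw v i.
Proof. by rewrite /yw mnmDE. Qed.
Lemma xwE a b i : xw (E a b) i = if i == a then d a else 0.
Proof. by rewrite /xw mnmE !eq_shift addn0. Qed.
Lemma ywE a b i : yw (E a b) i = if i == b then d b else 0.
Proof. by rewrite /yw mnmE !eq_shift. Qed.

Lemma axE w a b i : ax (w + E a b)%MM i = ax w i + (i == a).
Proof.
rewrite /ax xwD xwE; case: (altP (i =P a)) => [->|_].
  by rewrite divnDr ?dvdnn // divnn hd.
by rewrite !addn0.
Qed.
Lemma bxE w a b i : bx (w + E a b)%MM i = bx w i + (i == b).
Proof.
rewrite /bx ywD ywE; case: (altP (i =P b)) => [->|_].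
  by rewrite divnDr ?dvdnn // divnn hd.
by rewrite !addn0.
Qed.
Lemma xmodE w a b i : xw (w + E a b)%MM i %% d i = xw w i %% d i.
Proof. by rewrite xwD xwE; case: (altP (i =P a)) => [->|_]; rewrite ?modnDr ?addn0. Qed.
Lemma ymodE w a b i : yw (w + E a b)%MM i %% d i = yw w i %% d i.
Proof. by rewrite ywD ywE; case: (altP (i =P b)) => [->|_]; rewrite ?modnDr ?addn0. Qed.

Lemma key_swap w j : key (w + E i0 j)%MM = key (w + E j i0)%MM.
Proof.
have s0 a b : (a == i0) || (b == i0) ->
    (ax (w + E a b)%MM i0 + bx (w + E a b)%MM i0 == 0) = false.
  move=> hab; rewrite axE bxE; apply/negbTE; rewrite -lt0n.
  case/orP: hab => /eqP ->; rewrite eqxx /=; lia.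
rewrite /key !s0 ?eqxx ?orbT //.
have sm a b : \sum_i ax (w + E a b)%MM i = (\sum_i ax w i) + 1.
  rewrite (eq_bigr (fun i => ax w i + (i == a))); last by move=> i _; rewrite axE.
  rewrite big_split /=; congr (_ + _).
  by rewrite (bigD1 a) //= eqxx big1 ?addn0 // => i /negbTE ->.
rewrite !sm; congr (_, _, _, _, _); apply/ffunP => i; rewrite !ffunE.
- by rewrite !xmodE.
- by rewrite !ymodE.
- rewrite !axE !bxE; lia.
Qed.

Definition nonstd w :=
  [exists j : 'I_m, [&& 0 < val j, d i0 <= xw w i0 & d j <= yw w j]] ||
  [exists i : 'I_m, exists j : 'I_m,
     [&& 0 < val i, val i < val j, d i0 <= yw w i0, d i <= xw w i & d j <= yw w j]].

Lemma xw_eq w i : xw w i = ax w i * d i + xw w i %% d i.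
Proof. exact: divn_eq. Qed.
Lemma yw_eq w i : yw w i = bx w i * d i + yw w i %% d i.
Proof. exact: divn_eq. Qed.

Lemma key_min w0 w : ~~ nonstd w0 -> key w = key w0 -> w != w0 -> lex_lt w0 w.
Proof.
move=> hs hk hne; case: hk => h1 h2 h3 h4 h5.
have hsum i : ax w i + bx w i = ax w0 i + bx w0 i.
  by move/ffunP: h4 => /(_ i); rewrite !ffunE.
have hr i : xw w i %% d i = xw w0 i %% d i.
  by move/ffunP: h2 => /(_ i); rewrite !ffunE.
have hr' i : yw w i %% d i = yw w0 i %% d i.
  by move/ffunP: h3 => /(_ i); rewrite !ffunE.
case: (altP ((ax w0 i0 + bx w0 i0) =P 0)) => hz.
  by move: h1; rewrite hsum hz eqxx => h1; rewrite h1 eqxx in hne.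
have [k0 hk0] : exists k, ax w k != ax w0 k.
  apply/existsP; apply: contraNT hne; rewrite negb_exists => /forallP H.
  apply/eqP/mnmP => t; case: (split_ordP t) => k -> .
  - have := H k; rewrite negbK => /eqP hak.
    by rewrite -[w _]/(xw w k) -[w0 _]/(xw w0 k) xw_eq [xw w0 k]xw_eq hak hr.
  - have := H k; rewrite negbK => /eqP hak.
    have hb : bx w k = bx w0 k by move: (hsum k); rewrite hak => /addnI.
    by rewrite -[w _]/(yw w k) -[w0 _]/(yw w0 k) yw_eq [yw w0 k]yw_eq hb hr'.
case: (@arg_minnP _ k0 (fun k => ax w k != ax w0 k) (fun k : 'I_m => val k) hk0)
  => i hi hmin.
have hlt k : val k < val i -> ax w k = ax w0 k.
  move=> hk; apply/eqP; apply: contraTT hk => hk; rewrite -leqNgt; exact: hmin.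
have lti : ax w0 i < ax w i.
  rewrite ltnNge leq_eqVlt (negbTE hi) /=; apply/negP => lt.
  have [j hij hj] : exists2 j : 'I_m, val i < val j & ax w0 j < ax w j.
    case: (boolP [exists j : 'I_m, (val i < val j) && (ax w0 j < ax w j)]).
      by move=> /existsP[j /andP[??]]; exists j.
    rewrite negb_exists => /forallP H; exfalso.
    have le k : ax w k <= ax w0 k.
      case: (ltngtP (val k) (val i)) => [kl|kg|/val_inj ->]; first by rewrite hlt.
        by move: (H k); rewrite kg /= -leqNgt.
      exact: ltnW.
    by have := sum_lt le lt; rewrite h5 ltnn.
  have ha : d i <= xw w0 i by rewrite -divn_gt0 // -/(ax w0 i) (leq_ltn_trans _ lt).
  have hb : d j <= yw w0 j.
    rewrite -divn_gt0 // -/(bx w0 j); move: (hsum j) hj; lia.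
  move: hs; apply/negP; rewrite negbK.
  case: (posnP (val i)) => hv.
    have ei : i = i0 by apply/val_inj; rewrite hv hi0.
    apply/orP; left; apply/existsP; exists j; rewrite -ei ha hb andbT.
    by rewrite andbT -hv.
  case: (posnP (bx w0 i0)) => hb0.
    apply/orP; left; apply/existsP; exists j; rewrite hb andbT.
    rewrite (ltn_trans hv hij) /= -divn_gt0 // -/(ax w0 i0).
    by move: hz; rewrite hb0 addn0 lt0n.
  apply/orP; right; apply/existsP; exists i; apply/existsP; exists j.
  by rewrite hv hij ha hb -divn_gt0 ?hd //= andbT.
apply/lex_ltP; exists (lshift m i); split.
  move=> t ht; have tm : val t < m by exact: (ltn_trans ht (ltn_ord i)).
  have -> : t = lshift m (Ordinal tm) by apply/val_inj.
  rewrite -[w0 _]/(xw w0 _) -[w _]/(xw w _) xw_eq [xw w _]xw_eq hlt ?hr //.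
rewrite -[w0 _]/(xw w0 _) -[w _]/(xw w _) xw_eq [xw w _]xw_eq hr ltn_add2r.
by rewrite ltn_pmul2r.
Qed.
End Comb.
Local Open Scope ring_scope.

Section Main.
Variables (K : fieldType) (m : nat) (d : 'I_m -> nat).
Hypothesis hd : forall i, (0 < d i)%N.
Variable i0 : 'I_m.
Hypothesis hi0 : val i0 = 0%N.
Local Notation n := (m + m).
Local Notation E := (E d).

Definition Ym : 'X_{1..n} := [multinom (if k == rshift m i0 then d i0 else 0%N) | k < n].

Lemma xvE (a : 'I_m) (k : nat) : xv K a ^+ k = 'X_[U_(lshift m a) *+ k].
Proof. by rewrite /xv mpolyXn. Qed.
Lemma yvE (a : 'I_m) (k : nat) : yv K a ^+ k = 'X_[U_(rshift m a) *+ k].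
Proof. by rewrite /yv mpolyXn. Qed.

Lemma fijE a b : fij K d a b = 'X_[E a b] - 'X_[E b a].
Proof.
rewrite /fij !xvE !yvE -!mpolyXD; congr (_ - _); congr 'X_[_];
  apply/mnmP => k; rewrite mnmDE !mulmnE !mnm1E mnmE;
  by rewrite ![_ == k]eq_sym; do 2 case: (_ == _); rewrite ?mul1n ?mul0n.
Qed.

Lemma gE a b : yv K i0 ^+ d i0 * fij K d a b = 'X_[Ym + E a b] - 'X_[Ym + E b a].
Proof.
rewrite fijE mulrBr !mpolyXD yvE; congr ('X_[_] * _ - 'X_[_] * _);
  apply/mnmP => k; rewrite mulmnE mnm1E mnmE;
  by rewrite eq_sym; case: (_ == _); rewrite ?mul1n ?mul0n.
Qed.

Lemma lead_binom (A B : 'X_{1..n}) : lex_lt B A ->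
  lex_lead ('X_[A] - 'X_[B] : {mpoly K[n]}) A.
Proof.
move=> lt; have nBA := lex_neq lt.
split.
  rewrite mcoeff_msupp mcoeffB !mcoeffX eqxx (negbTE nBA) subr0; exact: oner_neq0.
move=> v; rewrite mcoeff_msupp mcoeffB !mcoeffX => hv vA.
rewrite [A == v]eq_sym (negbTE vA) sub0r oppr_eq0 in hv.
by case: (altP (B =P v)) hv => [<-|_] //; rewrite eqxx.
Qed.

Lemma YmX k : Ym (lshift m k) = 0%N.
Proof. by rewrite mnmE eq_shift. Qed.
Lemma YmY k : Ym (rshift m k) = if k == i0 then d i0 else 0%N.
Proof. by rewrite mnmE eq_shift. Qed.

Lemma lt_f j : j != i0 -> lex_lt (E j i0) (E i0 j).
Proof.
move=> ji0; apply/lex_ltP; exists (lshift m i0); split.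
  by move=> t; rewrite /= hi0.
rewrite -[E j i0 _]/(xw (E j i0) i0) -[E i0 j _]/(xw (E i0 j) i0) !xwE eqxx.
by rewrite eq_sym (negbTE ji0) hd.
Qed.

Lemma lt_g i j : (0 < val i)%N -> (val i < val j)%N ->
  lex_lt (Ym + E j i)%MM (Ym + E i j)%MM.
Proof.
move=> hi hij; have ij : i != j by apply: contraTneq hij => ->; rewrite ltnn.
apply/lex_ltP; exists (lshift m i); split.
  move=> t ht; have tm : (val t < m)%N by exact: (ltn_trans ht (ltn_ord i)).
  have -> : t = lshift m (Ordinal tm) by apply/val_inj.
  rewrite !mnmDE YmX -[E j i _]/(xw (E j i) _) -[E i j _]/(xw (E i j) _) !xwE.
  have -> : (Ordinal tm == j) = false.
    by apply/negbTE; apply: contraTneq ht => /(congr1 val) /= ->; rewrite -leqNgt ltnW.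
  have -> : (Ordinal tm == i) = false.
    by apply/negbTE; apply: contraTneq ht => /(congr1 val) /= ->; rewrite ltnn.
  by [].
rewrite !mnmDE YmX -[E j i _]/(xw (E j i) _) -[E i j _]/(xw (E i j) _) !xwE.
by rewrite eqxx (negbTE ij) hd.
Qed.

Lemma div_f j v : j != i0 -> (d i0 <= xw v i0)%N -> (d j <= yw v j)%N ->
  mdivides (E i0 j) v.
Proof.
move=> ji0 h1 h2; apply/forallP => t; case: (split_ordP t) => k ->.
  rewrite -[E _ _ _]/(xw (E i0 j) k) xwE; case: eqP => [->|] //.
rewrite -[E _ _ _]/(yw (E i0 j) k) ywE; case: eqP => [->|] //.
Qed.

Lemma div_g i j v : (0 < val i)%N -> (val i < val j)%N ->
  (d i0 <= yw v i0)%N -> (d i <= xw v i)%N -> (d j <= yw v j)%N ->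
  mdivides (Ym + E i j)%MM v.
Proof.
move=> hi hij h0 h1 h2; have ji0 : j != i0.
  by apply: contraTneq hij => ->; rewrite hi0.
apply/forallP => t; case: (split_ordP t) => k ->; rewrite mnmDE.
  by rewrite YmX -[E _ _ _]/(xw (E i j) k) xwE; case: eqP => [->|] //.
rewrite YmY -[E _ _ _]/(yw (E i j) k) ywE.
case: (altP (k =P i0)) => [->|_]; first by rewrite [i0 == j]eq_sym (negbTE ji0) addn0.
by case: eqP => [->|] //.
Qed.

Lemma memJ a b : val a = 0%N -> (0 < val b)%N -> fij K d a b \in JL_gens K d.
Proof.
move=> ha hb; rewrite /JL_gens; apply: allpairs_f; rewrite mem_filter mem_enum andbT.
  by rewrite ha. by [].
Qed.

Lemma memG i j : (0 < val i)%N -> (val i < val j)%N ->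
  yv K i0 ^+ d i0 * fij K d i j \in g_list K d.
Proof.
move=> hi hij; rewrite /g_list; apply/flattenP.
have H : i0 \in [seq a <- enum 'I_m | val a == 0%N] by rewrite mem_filter mem_enum hi0 eqxx.
eexists; first exact: (map_f _ H).
apply: (map_f (fun p : 'I_m * 'I_m => yv K i0 ^+ d i0 * fij K d p.1 p.2) (x := (i, j))).
rewrite mem_filter /= hi hij /=.
by apply: (allpairs_f (fun b c => (b, c))); rewrite mem_enum.
Qed.

Lemma JL_elem g : g \in JL_gens K d -> exists2 b : 'I_m, b != i0 & g = fij K d i0 b.
Proof.
case/allpairsP => [[a b] /= [ha hb ->]].
move: ha hb; rewrite !mem_filter => /andP[ha _] /andP[hb _].
have -> : a = i0 by apply/val_inj; rewrite hi0; apply/eqP.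
exists b => //; by apply: contraTneq hb => ->; rewrite hi0.
Qed.

Lemma R_ideal g : g \in R_list K d -> in_ideal (JL_gens K d) g.
Proof.
rewrite mem_cat => /orP[]; first exact: in_ideal_mem.
case/flattenP => s /mapP[a]; rewrite mem_filter => /andP[ha _] ->.
case/mapP => [[b c]]; rewrite mem_filter /= => /andP[/andP[hb hbc] _] ->.
have ha' : val a = 0%N by apply/eqP.
have -> : yv K a ^+ d a * fij K d b c =
    yv K b ^+ d b * fij K d a c - yv K c ^+ d c * fij K d a b.
  by rewrite /fij; ring.
apply: in_idealD; last apply: in_idealN; apply: in_idealM; apply: in_ideal_mem;
  apply: memJ => //; exact: ltn_trans hbc.
Qed.

Lemma fiber (v : 'X_{1..n}) f : in_ideal (JL_gens K d) f ->
  lam (fun w => ((key d i0 w == key d i0 v)%:R : K)) f = 0.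
Proof.
case=> c ->; rewrite lam_sum big1 // => k _.
have [b _ ->] := JL_elem (mem_nth 0 (ltn_ord k)).
rewrite fijE; apply: lam_binom => u.
by rewrite key_swap.
Qed.

Theorem main : lex_groebner_basis (R_list K d) (in_ideal (JL_gens K d)).
Proof.
split; first exact: R_ideal.
move=> f hf fne.
have sne : msupp f != [::] by rewrite msupp_eq0.
case: (lex_max sne) => v vs hv.
have lv : lex_lead f v by split.
case: (boolP (nonstd d i0 v)) => hns.
  case/orP: hns => [/existsP[j /and3P[hj h1 h2]]|/existsP[i /existsP[j /and5P[hi hij h0 h1 h2]]]].
    have ji0 : j != i0 by apply: contraTneq hj => ->; rewrite hi0.
    exists (fij K d i0 j); first by rewrite mem_cat memJ.
    exists (E i0 j), v; split => //; last exact: div_f.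
    by rewrite fijE; apply: lead_binom; apply: lt_f.
  exists (yv K i0 ^+ d i0 * fij K d i j); first by rewrite mem_cat memG ?orbT.
  exists (Ym + E i j)%MM, v; split => //; last exact: div_g.
  by rewrite gE; apply: lead_binom; apply: lt_g.
exfalso.
have := fiber v hf; rewrite /lam (bigD1_seq v) ?msupp_uniq //= eqxx mul1r.
rewrite big_seq_cond big1 ?addr0.
  by move/eqP; rewrite mcoeff_eq0 vs.
move=> w /andP[ws wv].
case: (altP (key d i0 w =P key d i0 v)) => [e|]; last by rewrite mul0r.
have l1 := key_min hd hi0 hns e wv.
by move: (lex_asym l1); rewrite hv.
Qed.
End Main.

Unset Implicit Arguments.
Theorem lemma4p12 (K : fieldType) (m : nat) (hm : (2 <= m)%N)
    (d : 'I_m -> nat) (hd : forall i, (0 < d i)%N) :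
  lex_groebner_basis (R_list K d) (in_ideal (JL_gens K d)).
Proof.
have hm0 : (0 < m)%N by apply: leq_trans hm.
exact: (@main K m d hd (Ordinal hm0) erefl).
Qed.
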